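(* Let $n\in\{2,3,4,5\}$, let $\zeta_n$ be a primitive $n$-th root of unity, and let $$M_q=\begin{pmatrix}\mathcal{R}(q) & \mathcal{V}(q)\\ \mathcal{S}(q) & \mathcal{U}(q)\end{pmatrix}\in G_q.$$ If the image of $M_q|_{q=1}\in\mathrm{SL}(2,\mathbb{Z})$ in $\mathrm{GL}(2,\mathbb{Z}/n\mathbb{Z})$ equals $\pm E_2$ (where $E_2$ is the identity matrix), then $\mathcal{R}(\zeta_n)=\mathcal{U}(\zeta_n)=\pm\zeta_n^j$ for some $0\le j<n$ and $\mathcal{V}(\zeta_n)=\mathcal{S}(\zeta_n)=0$.
   Context: Let $q$ be a formal parameter and let $R_q=\begin{pmatrix} q & 1\\ 0 & 1\end{pmatrix}$, $S_q=\begin{pmatrix} 0 & -q^{-1}\\ 1 & 0\end{pmatrix}\in \mathrm{GL}(2,\mathbb{Z}[q,q^{-1}])$. Let $G_q=\langle R_q,S_q\rangle$ be the group they generate. *)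

(* Defs.v *)
From HB Require Import structures.
From mathcomp Require Import all_boot all_order all_algebra all_field.
Set Implicit Arguments. Unset Strict Implicit. Unset Printing Implicit Defensive.
Import Order.TTheory GRing.Theory Num.Theory.
Local Open Scope ring_scope.

(* Letters of words in the generators R_q, S_q of G_q and their inverses. *)
Inductive gen_letter := LR | LRinv | LS | LSinv.

(* The generators (and their inverses) of G_q, specialised at a unit q = x
   of a commutative ring: R_x = [[x,1],[0,1]], S_x = [[0,-x^-1],[1,0]]. *)
Definition gen_mx (R : comUnitRingType) (x : R) (l : gen_letter) : 'M[R]_2 :=
  match l with
  | LR    => \matrix_(i < 2, j < 2)
               (if i == 0 then (if j == 0 then x else 1) else (if j == 0 then 0 else 1))
  | LRinv => \matrix_(i < 2, j < 2)
               (if i == 0 then (if j == 0 then x^-1 else - x^-1) else (if j == 0 then 0 else 1))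
  | LS    => \matrix_(i < 2, j < 2)
               (if i == 0 then (if j == 0 then 0 else - x^-1) else (if j == 0 then 1 else 0))
  | LSinv => \matrix_(i < 2, j < 2)
               (if i == 0 then (if j == 0 then 0 else 1) else (if j == 0 then - x else 0))
  end.

(* The element M_q of G_q given by the word w, specialised at q = x
   (specialisation q |-> x is a ring morphism Z[q,q^-1] -> R, so this is
   exactly M_q|_{q=x}). *)
Definition word_mx (R : comUnitRingType) (x : R) (w : seq gen_letter) : 'M[R]_2 :=
  foldr (fun l M => gen_mx x l *m M) 1%:M w.

(* Main.v *)
Require Import Defs.
From HB Require Import structures.
From mathcomp Require Import all_boot all_order all_algebra all_field.
From mathcomp Require Import ring.
Import Order.TTheory GRing.Theory Num.Theory.
Local Open Scope ring_scope.

Fixpoint addv (v w : seq int) : seq int :=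
  match v, w with
  | c :: v', d :: w' => (c + d) :: addv v' w'
  | [::], _ => w
  | _, [::] => v
  end.
Definition negv (v : seq int) := map (fun c => - c) v.
Definition mz (v : seq int) := rotr 1 v.
Definition mzi (v : seq int) := rot 1 v.
Definition normv (n : nat) (v : seq int) : seq int :=
  if n == 4%N then [:: nth 0 v 0 - nth 0 v 2; nth 0 v 1 - nth 0 v 3; 0; 0]
  else map (fun c => c - last 0 v) v.

Definition stA := (nat * nat * nat * nat)%type.
Definition stB := (seq int * seq int * seq int * seq int)%type.
Definition state := (stA * stB)%type.

Definition stepA (n : nat) (l : gen_letter) (A : stA) : stA :=
  let: (a00, a01, a10, a11) := A in
  match l with
  | LR => ((a00 + a10) %% n, (a01 + a11) %% n, a10, a11)
  | LRinv => ((a00 + n.-1 * a10) %% n, (a01 + n.-1 * a11) %% n, a10, a11)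
  | LS => ((n.-1 * a10) %% n, (n.-1 * a11) %% n, a00, a01)
  | LSinv => (a10, a11, (n.-1 * a00) %% n, (n.-1 * a01) %% n)
  end%N.

Definition stepB0 (l : gen_letter) (B : stB) : stB :=
  let: (b00, b01, b10, b11) := B in
  match l with
  | LR => (addv (mz b00) b10, addv (mz b01) b11, b10, b11)
  | LRinv => (addv (mzi b00) (negv (mzi b10)), addv (mzi b01) (negv (mzi b11)), b10, b11)
  | LS => (negv (mzi b10), negv (mzi b11), b00, b01)
  | LSinv => (b10, b11, negv (mz b00), negv (mz b01))
  end.

Definition normB n (B : stB) : stB :=
  let: (b00, b01, b10, b11) := B in (normv n b00, normv n b01, normv n b10, normv n b11).

Definition step n l (s : state) : state := (stepA n l s.1, normB n (stepB0 l s.2)).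

Definition letters := [:: LR; LRinv; LS; LSinv].

Definition e1 n : seq int := 1 :: nseq n.-1 0.
Definition zv n : seq int := nseq n 0.
Definition init n : state := ((1, 0, 0, 1)%N, (e1 n, zv n, zv n, e1 n)).

Fixpoint bfs n (fuel : nat) (X fr : seq state) : seq state :=
  match fuel with
  | 0%N => X
  | S f =>
    let nf := undup [seq t <- [seq step n l s | s <- fr, l <- letters] | t \notin X] in
    bfs n f (X ++ nf) nf
  end.

Definition Xn n := bfs n 40 [:: init n] [:: init n].

Definition wfB n (B : stB) := let: (b00, b01, b10, b11) := B in
  [&& size b00 == n, size b01 == n, size b10 == n & size b11 == n].
Definition wfA n (A : stA) := let: (a00, a01, a10, a11) := A in
  [&& a00 < n, a01 < n, a10 < n & a11 < n]%N.
Definition wf n (s : state) := wfA n s.1 && wfB n s.2.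

Definition ej n j (sg : bool) : seq int := nseq j 0 ++ ((-1) ^+ sg) :: nseq (n - j.+1) 0.

Definition isPM n (A : stA) := (A == (1, 0, 0, 1)%N) || (A == (n.-1, 0, 0, n.-1)%N).
Definition goodB n (B : stB) := let: (b00, b01, b10, b11) := B in
  [&& b01 == zv n, b10 == zv n, b00 == b11 &
   has (fun j => (b00 == normv n (ej n j false)) || (b00 == normv n (ej n j true))) (iota 0 n)].

Definition checks n (X : seq state) :=
  [&& init n \in X, all (wf n) X,
      all (fun s => all (fun l => step n l s \in X) letters) X &
      all (fun s => isPM n s.1 ==> goodB n s.2) X].

Lemma checks2 : checks 2 (Xn 2). Proof. by vm_compute. Qed.
Lemma checks3 : checks 3 (Xn 3). Proof. by vm_compute. Qed.
Lemma checks4 : checks 4 (Xn 4). Proof. by vm_compute. Qed.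
Lemma checks5 : checks 5 (Xn 5). Proof. by vm_compute. Qed.
Set Implicit Arguments. Unset Strict Implicit.

Fixpoint ev (z : algC) (v : seq int) : algC :=
  if v is c :: v' then c%:~R + z * ev z v' else 0.

Lemma ev_addv z v w : ev z (addv v w) = ev z v + ev z w.
Proof.
elim: v w => [|c v IH] [|d w] /=; rewrite ?addr0 ?add0r //.
by rewrite IH intrD mulrDr; ring.
Qed.

Lemma ev_negv z v : ev z (negv v) = - ev z v.
Proof. by elim: v => [|c v IH] /=; rewrite ?oppr0 // IH intrN mulrN opprD. Qed.

Lemma ev_cat z v w : ev z (v ++ w) = ev z v + z ^+ size v * ev z w.
Proof.
elim: v => [|c v IH] /=; first by rewrite add0r expr0 mul1r.
by rewrite IH exprS; ring.
Qed.

Lemma ev_mz n z v : z ^+ n = 1 -> size v = n -> ev z (mz v) = z * ev z v.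
Proof.
move=> zn; case/lastP: v => [|s c] /=.
  by move=> _; rewrite /mz /= mulr0.
rewrite size_rcons => sz.
have -> : mz (rcons s c) = c :: s.
  by rewrite /mz /rotr size_rcons subSS subn0 -cats1 rot_size_cat.
rewrite -cats1 ev_cat /= mulr0 addr0 mulrDr mulrA -exprS sz zn mul1r addrC.
done.
Qed.

Lemma ev_mzi n z v : z ^+ n = 1 -> z != 0 -> size v = n -> ev z (mzi v) = z^-1 * ev z v.
Proof.
move=> zn z0 sz.
have h := @ev_mz n z (rot 1 v) zn (etrans (size_rot 1 v) sz).
rewrite /mz /mzi rotK in h.
by rewrite h mulrA mulVf // mul1r.
Qed.

Lemma ev_nseq0 z k : ev z (nseq k 0) = 0.
Proof. by elim: k => //= k ->; rewrite mulr0 addr0. Qed.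

Lemma ev_shift z c v : ev z (map (fun x => x - c) v) = ev z v - c%:~R * ev z (nseq (size v) 1).
Proof. elim: v => [|a v IH] /=; first by rewrite mulr0 subr0. rewrite IH intrB; ring. Qed.

Lemma prim_ne1 n (z : algC) k : n.-primitive_root z -> (0 < k < n)%N -> z ^+ k != 1.
Proof.
move=> pz /andP[k0 kn]; rewrite -(prim_order_dvd pz).
by apply/negP => /(dvdn_leq k0); rewrite leqNgt kn.
Qed.

Lemma ev_normv n z v : (2 <= n <= 5)%N -> n.-primitive_root z -> size v = n ->
  ev z (normv n v) = ev z v.
Proof.
move=> hn pz sz.
have zn := prim_expr_order pz.
have z1 : z ^+ 1 != 1 by apply: (prim_ne1 pz); rewrite /=; case/andP: hn.
rewrite expr1 in z1.
have zm1 : z - 1 != 0 by rewrite subr_eq0.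
have hsum : n != 4%N -> ev z (nseq n 1) = 0.
  move=> n4; suff: (z - 1) * ev z (nseq n 1) == 0 by rewrite mulf_eq0 (negbTE zm1) => /eqP.
  case/andP: hn n4 zn; case: n {sz pz z1 zm1} => [|[|[|[|[|[|n]]]]]] //= _ _ _ zn;
  apply/eqP; rewrite -[RHS](subrr 1) -[X in _ = X - 1]zn; ring.
rewrite /normv; case: ifP => [/eqP n4 | /negbT n4].
  rewrite n4 in pz zn sz.
  have z2 : z ^+ 2 != 1 by apply: (prim_ne1 (k:=2) pz).
  have h : 1 + z ^+ 2 = 0.
    suff: (z ^+ 2 - 1) * (1 + z ^+ 2) == 0 by rewrite mulf_eq0 subr_eq0 (negbTE z2) => /eqP.
    by apply/eqP; rewrite -[RHS](subrr 1) -[X in _ = X - 1]zn; ring.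
  case: v sz => [|a [|b [|c [|d [|]]]]] //= _.
  rewrite !intrB; apply/eqP; rewrite -subr_eq0; apply/eqP.
  transitivity (-(c%:~R + z * d%:~R) * (1 + z^+2)); first ring.
  by rewrite h mulr0.
by rewrite ev_shift sz hsum // mulr0 subr0.
Qed.

Definition selB (B : stB) (i j : 'I_2) : seq int :=
  let: (b00, b01, b10, b11) := B in
  if i == 0 then (if j == 0 then b00 else b01) else (if j == 0 then b10 else b11).
Definition interpB z (B : stB) : 'M[algC]_2 := \matrix_(i, j) ev z (selB B i j).
Definition selA (A : stA) (i j : 'I_2) : nat :=
  let: (b00, b01, b10, b11) := A in
  if i == 0 then (if j == 0 then b00 else b01) else (if j == 0 then b10 else b11).
Definition interpA n (A : stA) : 'M['Z_n]_2 := \matrix_(i, j) (selA A i j)%:R.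

Lemma size_addv v w : size v = size w -> size (addv v w) = size v.
Proof. by elim: v w => [|a v IH] [|b w] //= [] /IH ->. Qed.

Lemma sum2 (R : nmodType) (f : 'I_2 -> R) : \sum_(i < 2) f i = f 0 + f 1.
Proof. by rewrite big_ord_recl big_ord1; congr (_ + f _); exact: val_inj. Qed.

Lemma stepB_ok n z l B : (2 <= n <= 5)%N -> n.-primitive_root z -> wfB n B ->
  interpB z (normB n (stepB0 l B)) = gen_mx z l *m interpB z B.
Proof.
move=> hn pz; case: B => [[[b00 b01] b10] b11] /and4P[/eqP s00 /eqP s01 /eqP s10 /eqP s11].
have zn := prim_expr_order pz.
have z0 : z != 0.
  apply/negP => /eqP z0; move: zn; rewrite z0 expr0n; case/andP: hn; case: (n) => //= n0 _ _.
  by move/eqP; rewrite eq_sym oner_eq0.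
apply/matrixP => i j; rewrite !mxE sum2 !mxE.
case: i => [[|[|i]]] hi //; case: j => [[|[|j]]] hj //; case: l => /=; rewrite !mxE /=;
  rewrite ?ev_normv ?size_addv ?size_map ?size_rot ?size_rotr ?s00 ?s01 ?s10 ?s11 //
    ?ev_addv ?ev_negv ?(ev_mz zn) ?(ev_mzi zn z0) ?size_map ?size_rot ?size_rotr //;
  ring.
Qed.

Definition fZ n := fun z : int => z%:~R : 'Z_n.

Lemma natm1 n : (1 < n)%N -> ((n.-1)%:R : 'Z_n) = -1.
Proof.
move=> hn; apply/eqP; rewrite -subr_eq0 opprK (natr1 n.-1) prednK ?pchar_Zp //.
by apply: leq_trans hn.
Qed.

Lemma stepA_ok n l A : (1 < n)%N ->
  interpA n (stepA n l A) = map_mx (fZ n) (gen_mx 1 l) *m interpA n A.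
Proof.
move=> hn; case: A => [[[a00 a01] a10] a11].
apply/matrixP => i j; rewrite !mxE sum2 !mxE.
case: i => [[|[|i]]] hi //; case: j => [[|[|j]]] hj //; case: l => /=; rewrite !mxE /fZ /=;
  rewrite ?Zp_nat_mod // ?natrD ?natrM ?natm1 // ?invr1 ?intrN ?mulN1r ?mul1r ?mul0r ?addr0 ?add0r //.
Qed.

Lemma mapM n (A B : 'M[int]_2) : map_mx (fZ n) (A *m B) = map_mx (fZ n) A *m map_mx (fZ n) B.
Proof.
apply/matrixP => i j; rewrite !mxE !sum2 !mxE /fZ intrD !intrM //.
Qed.

Lemma inv_ok n z X w : (2 <= n <= 5)%N -> n.-primitive_root z -> checks n X ->
  exists2 s, s \in X & interpA n s.1 = map_mx (fZ n) (word_mx 1 w) /\ interpB z s.2 = word_mx z w.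
Proof.
move=> hn pz /and4P[hi hwf hcl _].
have n1 : (1 < n)%N by case/andP: hn.
elim: w => [|l w [s sX [hA hB]]].
  exists (init n) => //; split; apply/matrixP => i j; rewrite !mxE /=;
  case: i => [[|[|i]]] hi' //; case: j => [[|[|j]]] hj' //=; rewrite /fZ /=;
  rewrite /e1 /zv ?ev_nseq0 ?mulr0 ?addr0 //.
move/allP: (hcl) => hcl'; move/allP: (hwf) => hwf'.
have hs := hcl' s sX.
have /andP [_ wB] := hwf' s sX.
exists (step n l s); first by move: hs; rewrite /letters /=; case: l => /and5P[h1 h2 h3 h4 h5].
split.
  by rewrite /step /= stepA_ok // hA /= -mapM.
by rewrite /step /= stepB_ok // hB.
Qed.

Lemma eqZp n a b : (1 < n)%N -> (a < n)%N -> (b < n)%N -> (a%:R : 'Z_n) = b%:R -> a = b.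
Proof.
move=> n1 an bn h; have := val_Zp_nat n1 a; rewrite h val_Zp_nat // !modn_small //.
Qed.

Lemma ev_ej n z j sg : ev z (ej n j sg) = (-1) ^+ sg * z ^+ j.
Proof.
rewrite /ej ev_cat ev_nseq0 add0r /= ev_nseq0 mulr0 addr0 size_nseq mulrC.
by case: sg; rewrite /= ?expr0 ?expr1 ?intrN.
Qed.

Lemma size_ej n j sg : (j < n)%N -> size (ej n j sg) = n.
Proof. by move=> jn; rewrite /ej size_cat /= !size_nseq subnSK // subnKC // ltnW. Qed.

Theorem main (n : nat) (zeta : algC) (w : seq gen_letter) (X : seq state) :
  (2 <= n <= 5)%N ->
  n.-primitive_root zeta -> checks n X ->
  (map_mx (fun z : int => z%:~R : 'Z_n) (word_mx (1 : int) w) = 1 \/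
   map_mx (fun z : int => z%:~R : 'Z_n) (word_mx (1 : int) w) = -1) ->
  exists (j : nat) (s : bool),
    (j < n)%N /\
    let M := word_mx zeta w in
    M 0 0 = (-1) ^+ s * zeta ^+ j /\ M 1 1 = (-1) ^+ s * zeta ^+ j /\
    M 0 1 = 0 /\ M 1 0 = 0.
Proof.
move=> hn pz hc hpm.
have n1 : (1 < n)%N by case/andP: hn.
have [s sX [hA hB]] := inv_ok w hn pz hc.
case/and4P: hc => _ hwf _ hfin.
move/allP: (hwf) => hwf'; move/allP: (hfin) => hfin'.
have /andP [wA wB] := hwf' s sX.
move: (hfin' s sX).
case: s sX hA hB wA wB => [[[[a00 a01] a10] a11] [[[b00 b01] b10] b11]] /= sX hA hB wA wB.
have pm : isPM n (a00, a01, a10, a11).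
  case/and4P: wA => h00 h01 h10 h11.
  have e i j : (selA (a00, a01, a10, a11) i j)%:R = (map_mx (fZ n) (word_mx 1 w)) i j.
    by rewrite -hA mxE.
  have e00 := e 0 0; have e01 := e 0 1; have e10 := e 1 0; have e11 := e 1 1.
  rewrite /= in e00 e01 e10 e11.
  case: hpm => [h | h]; rewrite /fZ h !mxE /= in e00 e01 e10 e11.
    apply/orP; left.
    have n0 : (0 < n)%N by apply: ltnW.
    move: (eqZp n1 h00 n1 e00) (eqZp n1 h01 n0 e01) (eqZp n1 h10 n0 e10) (eqZp n1 h11 n1 e11).
    by move=> -> -> -> ->.
  rewrite ?oppr0 in e01 e10.
  rewrite -(natm1 n1) in e00 e11.
  have hn1 : (n.-1 < n)%N by rewrite prednK // ltnW.
  have n0 : (0 < n)%N by apply: ltnW.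
  apply/orP; right.
  move: (eqZp n1 h00 hn1 e00) (eqZp n1 h01 n0 e01) (eqZp n1 h10 n0 e10) (eqZp n1 h11 hn1 e11).
  by move=> -> -> -> ->.
rewrite pm /= => /and4P[/eqP e01 /eqP e10 /eqP e0011 /hasP[j]].
rewrite mem_iota add0n => /andP[_ jn] hj.
have [sg hsg] : exists sg, b00 = normv n (ej n j sg).
  by case/orP: hj => /eqP ->; [exists false | exists true].
exists j, sg; split => //.
have M i k : word_mx zeta w i k = ev zeta (selB (b00, b01, b10, b11) i k) by rewrite -hB mxE.
rewrite /= !M /= -e0011 e01 e10 /zv ev_nseq0 hsg ev_normv ?size_ej // ev_ej.
by [].
Qed.

Lemma checks_all m : (2 <= m <= 5)%N -> checks m (Xn m).
Proof.
case: m => [|[|[|[|[|[|m]]]]]] H.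
- by [].
- by [].
- exact: checks2.
- exact: checks3.
- exact: checks4.
- exact: checks5.
- by [].
Qed.

Theorem corollary3p9 (n : nat) (zeta : algC) (w : seq gen_letter) :
  (2 <= n <= 5)%N ->
  n.-primitive_root zeta ->
  (map_mx (fun z : int => z%:~R : 'Z_n) (word_mx (1 : int) w) = 1 \/
   map_mx (fun z : int => z%:~R : 'Z_n) (word_mx (1 : int) w) = -1) ->
  exists (j : nat) (s : bool),
    (j < n)%N /\
    let M := word_mx zeta w in
    M 0 0 = (-1) ^+ s * zeta ^+ j /\ M 1 1 = (-1) ^+ s * zeta ^+ j /\
    M 0 1 = 0 /\ M 1 0 = 0.
Proof.
move=> hn pz hpm.
exact: (main hn pz (checks_all hn) hpm).
Qed.
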